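(* Let $0<q<1$, let $n$ be a positive integer and let $s_1,\dots,s_n$ be real numbers with $s_j>1$ for all $j$. Then \[ \sum_{\sigma\in\mathfrak{S}_n} \zeta\big[s_{\sigma(1)},s_{\sigma(2)},\dots,s_{\sigma(n)}\big] = \sum_{\mathscr{P}} (-1)^{n-|\mathscr{P}|} \prod_{P\in\mathscr{P}} (|P|-1)! \sum_{\nu=0}^{|P|-1}\binom{|P|-1}{\nu}(1-q)^{\nu}\,\zeta\Big[\sum_{j\in P}s_j-\nu\Big], \] where $\mathfrak{S}_n$ is the symmetric group on $\{1,\dots,n\}$ and the sum on the right runs over all unordered set partitions $\mathscr{P}$ of $\{1,\dots,n\}$ (sets of pairwise disjoint non-empty subsets with union $\{1,\dots,n\}$), $|\mathscr{P}|$ being the number of blocks.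
   Context: Fix $0<q<1$. For real $x$, $[x]_q := (1-q^x)/(1-q)$. For an integer $m\ge1$ and real $s_1,\dots,s_m$ with $s_1>1$ and $s_j\ge1$ for $j\ge2$, the multiple $q$-zeta function is $\zeta[s_1,\dots,s_m] := \sum_{k_1>\cdots>k_m>0}\prod_{j=1}^m q^{(s_j-1)k_j}/[k_j]_q^{s_j}$ (sum over positive integers). *)

(* Defs.v *)
From HB Require Import structures.
From mathcomp Require Import all_boot all_order all_algebra all_fingroup.
From mathcomp Require Import all_classical all_reals all_analysis.
Set Implicit Arguments. Unset Strict Implicit. Unset Printing Implicit Defensive.
Import Order.TTheory GRing.Theory Num.Theory numFieldNormedType.Exports.
Local Open Scope ring_scope.

Section QZeta.
Variable R : realType.

Definition qint (q x : R) : R := (1 - q `^ x) / (1 - q).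

Definition qterm (q s : R) (k : nat) : R :=
  q `^ ((s - 1) * k%:R) / (qint q k%:R) `^ s.

(* truncated multiple sum over N > k_1 > ... > k_m > 0 *)
Fixpoint mqzeta_trunc (q : R) (l : seq R) (N : nat) : R :=
  match l with
  | [::] => 1
  | s :: l' => \sum_(1 <= k < N) qterm q s k * mqzeta_trunc q l' k
  end.

Definition mqzeta (q : R) (l : seq R) : R :=
  limn (fun N => mqzeta_trunc q l N).

End QZeta.

(* Main.v *)
Require Import Defs.
From HB Require Import structures.
From mathcomp Require Import all_boot all_order all_algebra all_fingroup.
From mathcomp Require Import ring zify.
Set Implicit Arguments. Unset Strict Implicit. Unset Printing Implicit Defensive.
Import Order.TTheory GRing.Theory Num.Theory.
Local Open Scope ring_scope.

Lemma disjP (T : finType) (A B : {set T}) :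
  (forall x, x \in A -> x \in B -> False) -> [disjoint A & B].
Proof.
move=> H; rewrite disjoints_subset; apply/subsetP => x xA.
by rewrite inE; apply/negP => xB; exact: H xA xB.
Qed.

Lemma setUDK' (T : finType) (A B : {set T}) : B \subset A -> B :|: (A :\: B) = A.
Proof.
move=> BA; apply/setP => x; rewrite !inE.
by case: (boolP (x \in B)) => xB //=; rewrite (subsetP BA).
Qed.

Section Comb.
Variable T : finType.

Lemma coverD_sub (P Q : {set {set T}}) :
  trivIset P -> Q \subset P -> cover (P :\: Q) = cover P :\: cover Q.
Proof.
move=> /trivIsetP tP /subsetP QP; apply/setP => x; rewrite inE.
apply/bigcupP/andP => [[B /setDP[BP BQ] xB]|[xQ /bigcupP[B BP xB]]].
  split; last by apply/bigcupP; exists B.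
  apply/bigcupP => -[B' B'Q xB'].
  have := tP B B' BP (QP _ B'Q); case: eqP => [eBB'|_ /(_ isT)].
    by move: BQ; rewrite eBB' B'Q.
  by move/disjointFr => /(_ x xB); rewrite xB'.
exists B => //; rewrite inE BP andbT.
by apply: contraNN xQ => BQ; apply/bigcupP; exists B.
Qed.

Lemma cover_setU (P Q : {set {set T}}) : cover (P :|: Q) = cover P :|: cover Q.
Proof. by rewrite /cover bigcup_setU. Qed.

Lemma split_cond (A : {set T}) (Q P' : {set {set T}}) :
  partition Q (cover Q) -> cover Q \subset A ->
  (partition (Q :|: P') A && (Q \subset Q :|: P') && ((Q :|: P') :\: Q == P'))
  = partition P' (A :\: cover Q).
Proof.
move=> pQ cQA; apply/idP/idP.
  move=> /andP[/andP[pP QP] /eqP <-].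
  have tP := partition_trivIset pP.
  rewrite /partition coverD_sub // (cover_partition pP) eqxx trivIsetD //=.
  by rewrite inE negb_and (partition0 pP) orbT.
move=> pP'.
have dQP : [disjoint cover Q & cover P'].
  rewrite (cover_partition pP'); apply: disjP => x xQ; by rewrite inE xQ.
have QP'0 : [disjoint P' & Q].
  apply: disjP => B BP' BQ; have /set0Pn[x xB] := partition_neq0 pP' BP'.
  have xQ : x \in cover Q by apply/bigcupP; exists B.
  have : x \in cover P' by apply/bigcupP; exists B.
  by rewrite (cover_partition pP') inE xQ.
rewrite subsetUl andbT setDUl setDv set0U.
move/setDidPl: (QP'0) => ->; rewrite eqxx andbT.
rewrite /partition cover_setU (cover_partition pP') (setUDK' cQA) eqxx /=.
rewrite trivIsetU ?(partition_trivIset pQ) ?(partition_trivIset pP') //=.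
by rewrite inE (partition0 pQ) (partition0 pP').
Qed.


Lemma cover_subset (P Q : {set {set T}}) : Q \subset P -> cover Q \subset cover P.
Proof.
move=> /subsetP QP; apply/subsetP => x /bigcupP[B BQ xB].
by apply/bigcupP; exists B => //; apply: QP.
Qed.

Lemma partition_sub (P Q : {set {set T}}) A :
  partition P A -> Q \subset P -> partition Q (cover Q) && (cover Q \subset A).
Proof.
move=> pP QP; rewrite /partition eqxx (trivIsetS QP (partition_trivIset pP)) /=.
rewrite -(cover_partition pP) cover_subset // andbT.
by apply: contraTN isT => /(subsetP QP); rewrite (partition0 pP).
Qed.

Lemma split_sum (R : nmodType) (A : {set T})
    (G : {set {set T}} -> {set {set T}} -> R) :
  \sum_(P : {set {set T}} | partition P A) \sum_(Q : {set {set T}} | Q \subset P) G Q (P :\: Q) =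
  \sum_(S : {set T} | S \subset A) \sum_(Q : {set {set T}} | partition Q S)
     \sum_(P' : {set {set T}} | partition P' (A :\: S)) G Q P'.
Proof.
rewrite (exchange_big_dep xpredT) //= [RHS](exchange_big_dep xpredT) //=.
apply: eq_bigr => Q _.
case: (boolP (partition Q (cover Q) && (cover Q \subset A))) => [/andP[pQ cQA]|nb].
  rewrite (big_pred1 (cover Q)); last first.
    move=> S /=; apply/andP/eqP => [[_ pS]|->]; first by rewrite (cover_partition pS).
    by [].
  rewrite (reindex_onto (fun P' => Q :|: P') (fun P => P :\: Q)) /=; last first.
    by move=> P /andP[_ QP]; apply: setUDK'.
  apply: eq_big => P'; first by rewrite split_cond.
  by move=> /andP[_ /eqP ->].
rewrite big_pred0; last first.
  move=> P; apply/negP => /andP[pP QP]; move/negP: nb; apply.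
  exact: partition_sub pP QP.
rewrite big_pred0 // => S; apply/negP => /andP[SA pS]; move/negP: nb; apply.
by rewrite (cover_partition pS) pS.
Qed.


Lemma pick_block (P : {set {set T}}) A x (Q : {set {set T}}) :
  partition P A -> x \in A ->
  (Q \subset P) && ((x \in cover Q) && (#|Q| == 1%N)) = (Q == [set pblock P x]).
Proof.
move=> pP xA; have tP := partition_trivIset pP.
have xP : x \in cover P by rewrite (cover_partition pP).
apply/idP/eqP => [/andP[QP /andP[xQ /cards1P[B eQ]]]|->].
  move: QP xQ; rewrite eQ sub1set cover1 => BP xB.
  by rewrite (def_pblock tP BP xB).
by rewrite sub1set pblock_mem // cover1 mem_pblock xP cards1.
Qed.

Lemma one_block (Q : {set {set T}}) S x :
  partition Q S && ((x \in cover Q) && (#|Q| == 1%N)) = (x \in S) && (Q == [set S]).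
Proof.
apply/idP/andP => [/andP[pQ /andP[xQ /cards1P[B eQ]]]|[xS /eqP->]].
  move: pQ xQ; rewrite eQ => pB; rewrite -(cover_partition pB) cover1 => ->.
  by rewrite eqxx.
rewrite /partition cover1 eqxx trivIset1 cards1 xS eqxx !andbT /= inE.
by apply/negP => /eqP S0; move: xS; rewrite -S0 inE.
Qed.

Lemma decomp_sum (R : nmodType) (A : {set T}) x (F : {set {set T}} -> R) :
  x \in A ->
  \sum_(P : {set {set T}} | partition P A) F P =
  \sum_(U : {set T} | U \subset A :\ x)
     \sum_(P' : {set {set T}} | partition P' (A :\: (x |: U))) F ((x |: U) |: P').
Proof.
move=> xA.
pose G (Q P' : {set {set T}}) := if (x \in cover Q) && (#|Q| == 1%N) then F (Q :|: P') else 0.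
have := split_sum A G; rewrite /G.
have -> : \sum_(P : {set {set T}} | partition P A) \sum_(Q : {set {set T}} | Q \subset P)
     (if (x \in cover Q) && (#|Q| == 1%N) then F (Q :|: P :\: Q) else 0) =
   \sum_(P : {set {set T}} | partition P A) F P.
  apply: eq_bigr => P pP; rewrite -big_mkcondr /=.
  rewrite (big_pred1 [set pblock P x]); last by move=> Q; rewrite (pick_block _ pP xA).
  by rewrite setUDK' // sub1set pblock_mem // (cover_partition pP).
move=> ->.
have E : forall S : {set T}, \sum_(Q : {set {set T}} | partition Q S)
     \sum_(P' : {set {set T}} | partition P' (A :\: S))
       (if (x \in cover Q) && (#|Q| == 1%N) then F (Q :|: P') else 0) =
   if x \in S then \sum_(P' : {set {set T}} | partition P' (A :\: S)) F ([set S] :|: P')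
   else 0.
  move=> S.
  have -> : \sum_(Q : {set {set T}} | partition Q S)
     \sum_(P' : {set {set T}} | partition P' (A :\: S))
       (if (x \in cover Q) && (#|Q| == 1%N) then F (Q :|: P') else 0) =
     \sum_(Q : {set {set T}} | partition Q S)
       (if (x \in cover Q) && (#|Q| == 1%N) then
        \sum_(P' : {set {set T}} | partition P' (A :\: S)) F (Q :|: P') else 0).
    by apply: eq_bigr => Q _; case: ifP => // _; rewrite big1.
  rewrite -big_mkcondr /=.
  case: (boolP (x \in S)) => xS.
    by rewrite (big_pred1 [set S]) // => Q; rewrite /= one_block xS.
  by rewrite big_pred0 // => Q; rewrite /= one_block (negbTE xS).
rewrite (eq_bigr _ (fun S _ => E S)) -big_mkcondr /=.
rewrite (reindex_onto (fun U => x |: U) (fun S => S :\ x)) /=; last first.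
  by move=> S /andP[_ xS]; rewrite setD1K.
apply: eq_bigl => U; rewrite subsetD1 setU11 andbT subUset sub1set xA /=.
case: (boolP (x \in U)) => xU /=; last by rewrite setU1K ?eqxx ?andbT.
rewrite andbF; apply/negbTE/negP => /andP[_ /eqP E1].
by move: xU; rewrite -E1 !inE eqxx.
Qed.


Lemma sum_by_card (R : nmodType) (V : {set T}) (g : nat -> R) :
  \sum_(U : {set T} | U \subset V) g #|U| = \sum_(k < #|V|.+1) g k *+ 'C(#|V|, k).
Proof.
rewrite (partition_big (fun U : {set T} => inord #|U| : 'I_#|V|.+1) xpredT) //=.
apply: eq_bigr => k _.
have E : forall U : {set T}, U \subset V -> (inord #|U| == k :> 'I_#|V|.+1) = (#|U| == k).
  by move=> U UV; rewrite -val_eqE /= inordK // ltnS subset_leq_card.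
rewrite (eq_bigr (fun _ => g k)); last first.
  by move=> U /andP[UV]; rewrite E // => /eqP ->.
rewrite sumr_const -cards_draws; congr (_ *+ _); apply: eq_card => U.
rewrite !inE unfold_in /=; case: (boolP (U \subset V)) => UV /=; rewrite ?E //.
Qed.

Section CK.
Variable R : comRingType.

Definition cK (S : {set T}) : R :=
  \sum_(Q : {set {set T}} | partition Q S)
     (-1) ^+ (#|S| + #|Q|) * \prod_(B in Q) (#|B|.-1)`!%:R.

Lemma cK_val S : cK S = (#|S| <= 1)%N%:R.
Proof.
have [N leN] := ubnP #|S|; elim: N => // N IH in S leN *.
case: (set_0Vmem S) => [->|[x xS]].
  rewrite /cK (big_pred1 set0) => [|Q]; last by rewrite partition_set0.
  by rewrite !cards0 big_set0 mulr1 addn0 expr0.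
rewrite /cK (decomp_sum _ xS).
set m := #|S :\ x|.
have cS : #|S| = m.+1 by rewrite /m (cardsD1 x S) xS.
have step : forall U : {set T}, U \subset S :\ x ->
    \sum_(P' : {set {set T}} | partition P' (S :\: (x |: U)))
       ((-1) ^+ (#|S| + #|(x |: U) |: P'|) * \prod_(B in (x |: U) |: P') (#|B|.-1)`!%:R : R)
    = (-1) ^+ #|U| * #|U|`!%:R * ((m - #|U| <= 1)%N%:R).
  move=> U UV.
  have xU : x \notin U by apply/negP => /(subsetP UV); rewrite !inE eqxx.
  have xUS : x |: U \subset S by rewrite subUset sub1set xS (subset_trans UV) ?subsetDl.
  have cU : #|x |: U| = #|U|.+1 by rewrite cardsU1 xU.
  have cS' : #|S :\: (x |: U)| = (m - #|U|)%N.
    rewrite cardsD (setIidPr xUS) cU cS subSS //.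
  have ltS' : (#|S :\: (x |: U)| < N)%N.
    by move: leN; rewrite cS' cS; lia.
  rewrite -cS' -(IH _ ltS') /cK big_distrr /=.
  apply: eq_bigr => P' pP'.
  have nin : x |: U \notin P'.
    apply/negP => inP; have : x \in cover P' by apply/bigcupP; exists (x |: U); rewrite ?setU11.
    by rewrite (cover_partition pP') !inE eqxx.
  have leU : (#|U| <= m)%N by rewrite /m subset_leq_card.
  rewrite cardsU1 nin big_setU1 //= cU /=.
  have -> : (#|S| + (1 + #|P'|))%N = (#|U| + (#|S :\: (x |: U)| + #|P'|)).+2.
    rewrite cS' cS; lia.
  rewrite !exprS !mulN1r opprK exprD !mulrA; congr (_ * _); exact: mulrAC.
rewrite (eq_bigr _ step).
rewrite (sum_by_card _ (fun k => (-1) ^+ k * k`!%:R * ((m - k <= 1)%N%:R) : R)).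
rewrite cS -/m; clear step; clearbody m; clear cS leN IH; case: m => [|m'].
  by rewrite big_ord_recr big_ord0 /= add0r binn expr0 mul1r mulr1.
rewrite !big_ord_recr /= big1; last first.
  by move=> k _; rewrite (_ : (m'.+1 - k <= 1)%N = false) ?mulr0 ?mul0rn //; case: k => k /= kl; lia.
rewrite binSn binn subnn subSnn factS natrM exprS /= -mulr_natr; ring.
Qed.


Lemma prod_subsets (P : {set {set T}}) (a b : {set T} -> R) :
  \prod_(B in P) (a B + b B) =
  \sum_(Q : {set {set T}} | Q \subset P) (\prod_(B in Q) a B * \prod_(B in P :\: Q) b B).
Proof.
rewrite big_mkcond /=.
rewrite (eq_bigr (fun B => (if B \in P then a B else 0) + (if B \in P then b B else 1)));
  last by move=> B _; case: ifP; rewrite ?addr0 ?add0r.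
rewrite bigA_distr [RHS]big_mkcond /=; apply: eq_bigr => J _.
case: (boolP (J \subset P)) => JP.
  rewrite (bigID (fun B => B \in J)) /=; congr (_ * _).
    by apply: eq_bigr => B BJ; rewrite BJ (subsetP JP).
  rewrite big_mkcond [RHS]big_mkcond; apply: eq_bigr => B _.
  by rewrite !inE; case: (B \in J); case: (B \in P).
have [B BJ BP] : exists2 B, B \in J & B \notin P.
  by move/subsetPn: JP => [B ? ?]; exists B.
by rewrite (bigD1 B) //= BJ (negbTE BP) mul0r.
Qed.

Lemma sum_le1 (A : {set T}) (h : {set T} -> R) :
  \sum_(S : {set T} | S \subset A) (#|S| <= 1)%N%:R * h S =
  h set0 + \sum_(y in A) h [set y].
Proof.
rewrite (eq_bigr (fun S : {set T} => if (#|S| <= 1)%N then h S else 0)); last first.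
  by move=> S _; case: ifP; rewrite ?mul1r ?mul0r.
rewrite -big_mkcondr /= (bigD1 set0) ?sub0set ?cards0 //=; congr (_ + _).
rewrite -(big_imset (fun S => h S) (h := set1) (A := A)) /=; last first.
  by move=> y z _ _; apply: set1_inj.
apply: eq_bigl => S; apply/idP/imsetP => [/andP[/andP[SA]]|[y yA ->]].
  rewrite leq_eqVlt ltnS leqn0 cards_eq0 => /orP[/cards1P[y Sy] _|->//].
  by exists y => //; rewrite -sub1set -Sy.
by rewrite sub1set yA cards1 /=; apply/negP => /eqP/setP/(_ y); rewrite !inE eqxx.
Qed.

Variable f : T -> nat -> R.

Definition Dq (B : {set T}) N : R := \sum_(k < N) \prod_(j in B) f j k.

Definition RP (A : {set T}) N : R :=
  \sum_(P : {set {set T}} | partition P A)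
    (-1) ^+ (#|A| + #|P|) * \prod_(B in P) ((#|B|.-1)`!%:R * Dq B N).

Fixpoint Iq (N : nat) (A : {set T}) : R :=
  match N with
  | 0 => (A == set0)%:R
  | N'.+1 => Iq N' A + \sum_(y in A) f y N' * Iq N' (A :\ y)
  end.

Lemma RP0 A : RP A 0 = (A == set0)%:R.
Proof.
rewrite /RP; case: (boolP (A == set0)) => [/eqP->|A0].
  rewrite (big_pred1 set0) => [|P]; last by rewrite partition_set0.
  by rewrite !cards0 big_set0 mulr1 expr0.
rewrite big1 // => P pP.
have [B BP] : exists B, B \in P.
  apply/set0Pn; apply: contraNneq A0 => P0.
  by rewrite -(cover_partition pP) P0 /cover big_set0.
by rewrite (bigD1 B) //= /Dq big_ord0 mulr0 mul0r mulr0.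
Qed.

Lemma RPS A N : RP A N.+1 = RP A N + \sum_(y in A) f y N * RP (A :\ y) N.
Proof.
rewrite /RP.
pose G (Q P' : {set {set T}}) :=
  (-1) ^+ (#|cover Q| + #|Q|) * \prod_(B in Q) ((#|B|.-1)`!%:R * \prod_(j in B) f j N) *
  ((-1) ^+ (#|A :\: cover Q| + #|P'|) * \prod_(B in P') ((#|B|.-1)`!%:R * Dq B N)).
transitivity (\sum_(P : {set {set T}} | partition P A)
   \sum_(Q : {set {set T}} | Q \subset P) G Q (P :\: Q)).
  apply: eq_bigr => P pP.
  under eq_bigr => B _ do rewrite /Dq big_ord_recr /= mulrDr addrC.
  rewrite prod_subsets big_distrr /=; apply: eq_bigr => Q QP.
  rewrite /G mulrACA -exprD; congr (_ ^+ _ * _).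
  have cQA : cover Q \subset A by rewrite -(cover_partition pP) cover_subset.
  have e1 : #|A| = (#|cover Q| + #|A :\: cover Q|)%N.
    by rewrite cardsD (setIidPr cQA) subnKC // subset_leq_card.
  have e2 : #|P| = (#|Q| + #|P :\: Q|)%N.
    by rewrite cardsD (setIidPr QP) subnKC // subset_leq_card.
  rewrite e1 e2; lia.
rewrite split_sum.
rewrite (eq_bigr (fun S : {set T} => (#|S| <= 1)%N%:R * (\prod_(j in S) f j N *
     \sum_(P' : {set {set T}} | partition P' (A :\: S))
     (-1) ^+ (#|A :\: S| + #|P'|) * \prod_(B in P') ((#|B|.-1)`!%:R * Dq B N)))); last first.
  move=> S SA; rewrite -cK_val /cK !big_distrl /=; apply: eq_bigr => Q pQ.
  rewrite mulrA big_distrr /=; apply: eq_bigr => P' pP'.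
  rewrite /G (cover_partition pQ) big_split /= -(set_partition_big _ pQ).
  by rewrite !mulrA.
rewrite sum_le1 big_set0 mul1r setD0; congr (_ + _).
by apply: eq_bigr => y yA; rewrite big_set1.
Qed.

Lemma Iq_RP N A : Iq N A = RP A N.
Proof.
elim: N A => [|N IH] A /=; first by rewrite RP0.
by rewrite RPS IH; congr (_ + _); apply: eq_bigr => y _; rewrite IH.
Qed.


Fixpoint Nest (l : seq T) (N : nat) : R :=
  match l with
  | [::] => 1
  | x :: l' => \sum_(k < N) f x k * Nest l' k
  end.

Lemma NestS x l N : Nest (x :: l) N.+1 = Nest (x :: l) N + f x N * Nest l N.
Proof. by rewrite /= big_ord_recr. Qed.

Lemma sum_perms (F : seq T -> R) (l : seq T) : uniq l -> (0 < size l)%N ->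
  \sum_(p <- permutations l) F p = \sum_(x <- l) \sum_(t <- permutations (rem x l)) F (x :: t).
Proof.
move=> ul sl; rewrite (perm_big _ (permutationsE sl)) /= undup_id //.
by rewrite big_allpairs_dep.
Qed.

Lemma sum_perms_Nest N (l : seq T) : uniq l ->
  \sum_(p <- permutations l) Nest p N = Iq N [set x in l].
Proof.
elim: N l => [|N IH] l ul.
  case: l ul => [|x l] ul.
    have -> : [set x in [::] : seq T] = set0 by apply/setP => y; rewrite !inE.
    by rewrite /= big_seq1 eqxx.
  rewrite sum_perms //= big1_seq.
    case: eqP => // /setP /(_ x); rewrite !inE eqxx //.
  by move=> y _; rewrite big1 // => t _; rewrite big_ord0.
case: l ul => [|x0 l0] ul.
  have E0 : [set x in [::] : seq T] = set0 by apply/setP => y; rewrite !inE.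
  rewrite /= big_seq1 -(IH [::]) // E0 big_set0 addr0 /=.
  by rewrite big_seq1.
set l := x0 :: l0.
rewrite sum_perms //.
under eq_bigr => x _ do under eq_bigr => t _ do rewrite NestS.
under eq_bigr => x _ do rewrite big_split /= -big_distrr /=.
rewrite big_split /= -(sum_perms (fun p => Nest p N)) // IH //; congr (_ + _).
rewrite big_uniq //; apply: eq_big => [y|y yl]; first by rewrite inE.
rewrite (IH (rem y l)) ?rem_uniq //.
suff -> : [set x in rem y l] = [set x in l] :\ y by [].
by apply/setP => z; rewrite !inE (mem_rem_uniq _ ul) inE andbC.
Qed.

End CK.

End Comb.

Lemma sum_Sn (R : nmodType) n (G : seq 'I_n -> R) :
  \sum_(s : 'S_n) G [seq s i | i <- enum 'I_n] =
  \sum_(p <- permutations (enum 'I_n)) G p.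
Proof.
pose g := fun s : 'S_n => [seq s i | i <- enum 'I_n].
rewrite -(big_map g xpredT G); apply: perm_big.
have ginj : injective g.
  move=> s t /eq_in_map E; apply/permP => i; exact: E (mem_enum _ i).
have us1 : uniq (map g (index_enum 'S_n)) by rewrite map_inj_uniq // index_enum_uniq.
apply: uniq_perm => //; first exact: permutations_uniq.
have sz : size (map g (index_enum 'S_n)) = (size (enum 'I_n))`!.
  by rewrite size_map [index_enum _]unlock -enumT -cardT card_Sn size_enum_ord.
apply: (uniq_min_size us1 _ _).2.
  move=> p /mapP[s _ ->]; rewrite mem_permutations /g.
  apply: uniq_perm; [by rewrite map_inj_uniq ?enum_uniq //; exact: perm_inj|exact: enum_uniq|].
  move=> i; rewrite mem_enum; apply/mapP; exists (s^-1 i)%g; first by rewrite mem_enum.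
  by rewrite permKV.
by rewrite size_permutations ?enum_uniq // sz.
Qed.


From mathcomp Require Import all_classical all_reals all_analysis.
From mathcomp Require Import lra.
Import Order.TTheory GRing.Theory Num.Theory numFieldNormedType.Exports.
Local Open Scope classical_set_scope.
Local Open Scope ring_scope.

Section Lims.
Variable R : realType.

Lemma cvg_sum_seq (I : eqType) (r : seq I) (P : pred I) (u : I -> nat -> R) (a : I -> R) :
  (forall i, i \in r -> P i -> u i n @[n --> \oo] --> a i) ->
  (\sum_(i <- r | P i) u i n) @[n --> \oo] --> \sum_(i <- r | P i) a i.
Proof.
elim: r => [|i r IH] h.
  rewrite big_nil; under eq_cvg do rewrite big_nil; exact: cvg_cst.
rewrite big_cons; under eq_cvg do rewrite big_cons.
have IH' := IH (fun j jr => h j ltac:(by rewrite inE jr orbT)).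
case: ifP => Pi //.
exact: (cvgD (h i (mem_head _ _) Pi) IH').
Qed.

Lemma cvg_prod_seq (I : Type) (r : seq I) (P : pred I) (u : I -> nat -> R) (a : I -> R) :
  (forall i, P i -> u i n @[n --> \oo] --> a i) ->
  (\prod_(i <- r | P i) u i n) @[n --> \oo] --> \prod_(i <- r | P i) a i.
Proof.
move=> h; elim: r => [|i r IH].
  rewrite big_nil; under eq_cvg do rewrite big_nil; exact: cvg_cst.
rewrite big_cons; under eq_cvg do rewrite big_cons.
case: ifP => Pi //.
exact: (cvgM (h i Pi) IH).
Qed.

End Lims.

Section QFacts.
Variables (R : realType) (q : R).
Hypotheses (hq0 : 0 < q) (hq1 : q < 1).

Lemma qpow k : q `^ k%:R = q ^+ k.
Proof. by rewrite powR_mulrn // ltW. Qed.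

Lemma qint_ge1 k : (0 < k)%N -> 1 <= qint q k%:R.
Proof.
case: k => // k _; rewrite /qint qpow ler_pdivlMr ?subr_gt0 // mul1r.
rewrite lerD2l lerN2 exprS; apply: ler_piMr; first exact: ltW.
exact: exprn_ile1 (ltW hq0) (ltW hq1).
Qed.

Lemma qterm_ge0 x k : 0 <= qterm q x k.
Proof. by rewrite /qterm divr_ge0 ?powR_ge0. Qed.

Lemma qterm0 x : x != 0 -> qterm q x 0 = 0.
Proof.
move=> x0; rewrite /qterm /qint (_ : (0%:R : R) = 0) // powRr0 subrr mul0r.
by rewrite powR0 // invr0 mulr0.
Qed.

Lemma qterm_le x k : 1 < x -> qterm q x k <= (q `^ (x - 1)) ^+ k.
Proof.
move=> x1; case: k => [|k]; first by rewrite qterm0 ?expr0 ?gt_eqF // (lt_trans ltr01).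
have K1 := qint_ge1 (ltn0Sn k).
have K0 : 0 < qint q k.+1%:R by apply: lt_le_trans K1.
rewrite /qterm ler_pdivrMr ?powR_gt0 // powRrM powR_mulrn ?powR_ge0 //.
rewrite ler_peMr ?exprn_ge0 ?powR_ge0 //.
have := @ler_powR _ (qint q k.+1%:R) K1 0 x; rewrite powRr0; apply.
exact: ltW (lt_trans ltr01 x1).
Qed.

Lemma qr_lt1 x : 1 < x -> q `^ (x - 1) < 1.
Proof.
move=> x1; apply: (@lt_le_trans _ _ (1 `^ (x - 1))); last by rewrite powR1.
apply: gt0_ltr_powR => //; rewrite ?subr_gt0 // nnegrE; exact: ltW.
Qed.

Lemma geom_le (r : R) N : 0 <= r -> r < 1 -> \sum_(k < N) r ^+ k <= (1 - r)^-1.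
Proof.
move=> r0 r1.
have E : (1 - r) * \sum_(k < N) r ^+ k = 1 - r ^+ N.
  elim: N => [|N IH]; first by rewrite big_ord0 mulr0 expr0 subrr.
  by rewrite big_ord_recr /= mulrDr IH exprS; ring.
rewrite -(ler_pM2l (_ : 0 < 1 - r)) ?subr_gt0 // E mulfV ?gt_eqF ?subr_gt0 //.
have := exprn_ge0 N r0; lra.
Qed.

Lemma sum1 (G : nat -> R) N : G 0%N = 0 -> \sum_(1 <= k < N) G k = \sum_(k < N) G k.
Proof.
move=> G0; rewrite -(big_mkord xpredT); case: N => [|N]; first by rewrite !big_geq.
by rewrite [RHS]big_ltn // G0 add0r.
Qed.

Lemma trunc_cons x l N : x != 0 ->
  mqzeta_trunc q (x :: l) N = \sum_(k < N) qterm q x k * mqzeta_trunc q l k.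
Proof. by move=> x0; rewrite /= sum1 // qterm0 // mul0r. Qed.

Lemma trunc_ge0 l N : 0 <= mqzeta_trunc q l N.
Proof.
elim: l N => [|x l IH] N /=; first exact: ler01.
by apply: sumr_ge0 => k _; rewrite mulr_ge0 ?qterm_ge0.
Qed.

Definition Cb (l : seq R) : R := \prod_(x <- l) (1 - q `^ (x - 1))^-1.

Lemma Cb_ge0 l : all (fun x => 1 < x) l -> 0 <= Cb l.
Proof.
elim: l => [|x l IH] /=; first by rewrite /Cb big_nil ler01.
move=> /andP[x1 al]; rewrite /Cb big_cons mulr_ge0 ?IH //.
by rewrite invr_ge0 subr_ge0 ltW // qr_lt1.
Qed.

Lemma trunc_le l N : all (fun x => 1 < x) l -> mqzeta_trunc q l N <= Cb l.
Proof.
elim: l N => [|x l IH] N; first by move=> _; rewrite /Cb big_nil /=.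
rewrite [all _ _]/= => /andP[x1 al]; rewrite trunc_cons ?gt_eqF ?(lt_trans ltr01) //.
rewrite /Cb big_cons -/(Cb l).
apply: (@le_trans _ _ (\sum_(k < N) (q `^ (x - 1)) ^+ k * Cb l)).
  apply: ler_sum => k _; apply: ler_pM; rewrite ?qterm_ge0 ?trunc_ge0 ?qterm_le //.
  exact: IH.
rewrite -big_distrl /= ler_wpM2r ?Cb_ge0 //.
by apply: geom_le; rewrite ?powR_ge0 ?qr_lt1.
Qed.

Lemma trunc_nd l : all (fun x => 1 < x) l -> nondecreasing_seq (mqzeta_trunc q l).
Proof.
case: l => [|x l] al; apply/nondecreasing_seqP => N; first by [].
move: al => /andP[x1 _].
rewrite !trunc_cons ?gt_eqF ?(lt_trans ltr01) // big_ord_recr /= lerDl.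
by rewrite mulr_ge0 ?qterm_ge0 ?trunc_ge0.
Qed.

Lemma trunc_cvg l : all (fun x => 1 < x) l ->
  mqzeta_trunc q l N @[N --> \oo] --> mqzeta q l.
Proof.
move=> al; apply: nondecreasing_is_cvgn; first exact: trunc_nd.
by exists (Cb l) => y [N _ <-]; exact: trunc_le.
Qed.

End QFacts.

Section Block.
Variables (R : realType) (q : R).
Hypotheses (hq0 : 0 < q) (hq1 : q < 1).
Variables (n : nat) (s : 'I_n -> R).
Hypothesis hs : forall j, 1 < s j.

Lemma powRV (K x : R) : 0 < K -> (K^-1) `^ x = (K `^ x)^-1.
Proof.
move=> K0; have h : K `^ x * (K^-1) `^ x = 1.
  by rewrite -powRM ?invr_ge0 ?ltW // mulfV ?gt_eqF // powR1.
have Kx0 : K `^ x != 0 by rewrite gt_eqF // powR_gt0.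
by apply: (mulfI Kx0); rewrite h mulfV.
Qed.

Lemma qterm_form x k : (0 < k)%N ->
  qterm q x k = ((q ^+ k) / qint q k%:R) `^ x / q ^+ k.
Proof.
move=> k0; have Q0 : 0 < q ^+ k by rewrite exprn_gt0.
have K0 : 0 < qint q k%:R by apply: lt_le_trans (qint_ge1 hq0 hq1 k0).
rewrite /qterm (mulrC (x - 1)) powRrM (qpow hq0).
rewrite powRB; last by apply/implyP => _; rewrite gt_eqF.
by rewrite powRr1 ?ltW // powRM ?invr_ge0 ?ltW // powRV // mulrAC.
Qed.

Lemma prod_powR (r : R) (B : {set 'I_n}) : 0 < r ->
  \prod_(j in B) r `^ (s j) = r `^ (\sum_(j in B) s j).
Proof.
move=> r0; elim/big_rec2: _ => [|j y1 y2 _ ->]; first by rewrite powRr0.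
by rewrite powRD //; apply/implyP => _; rewrite gt_eqF.
Qed.

Lemma sum_gt_card (B : {set 'I_n}) : (0 < #|B|)%N -> #|B|%:R < \sum_(j in B) s j.
Proof.
move=> /card_gt0P[j0 j0B].
rewrite -subr_gt0 -sumr_const -sumrB (bigD1 j0) //=.
apply: (lt_le_trans (_ : 0 < s j0 - 1)); first by rewrite subr_gt0.
by rewrite lerDl sumr_ge0 // => j _; rewrite subr_ge0 ltW.
Qed.

Lemma block_k (B : {set 'I_n}) k : (0 < #|B|)%N ->
  \prod_(j in B) qterm q (s j) k =
  \sum_(nu < #|B|) 'C(#|B|.-1, nu)%:R * (1 - q) ^+ nu *
     qterm q ((\sum_(j in B) s j) - nu%:R) k.
Proof.
move=> B0; have SB := sum_gt_card B0.
set S := \sum_(j in B) s j in SB *.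
have Snu : forall nu : 'I_#|B|, 1 < S - nu%:R.
  move=> [nu /= nuB]; have : (nu.+1%:R : R) <= #|B|%:R by rewrite ler_nat.
  rewrite -natr1; lra.
case: k => [|k].
  have /card_gt0P[j0 j0B] := B0.
  rewrite (bigD1 j0) //= qterm0 ?gt_eqF ?(lt_trans ltr01 (hs j0)) // mul0r.
  by rewrite big1 // => nu _; rewrite qterm0 ?mulr0 // gt_eqF // (lt_trans ltr01).
set Q := q ^+ k.+1; set K := qint q k.+1%:R.
have Q0 : 0 < Q by rewrite exprn_gt0.
have K0 : 0 < K by apply: lt_le_trans (qint_ge1 hq0 hq1 (ltn0Sn k)).
have r0 : 0 < Q / K by rewrite divr_gt0.
have Q1 : Q < 1 by rewrite exprn_ilt1 // ltW.
have q1 : 1 - q != 0 by rewrite subr_eq0 eq_sym lt_eqF.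
have Q1' : 1 - Q != 0 by rewrite subr_eq0 eq_sym lt_eqF.
rewrite (eq_bigr (fun j => (Q / K) `^ (s j) * Q^-1)); last by move=> j _; rewrite qterm_form.
rewrite big_split /= prodr_const prod_powR // -/S.
rewrite (eq_bigr (fun nu : 'I_#|B| => (Q / K) `^ S / Q * ('C(#|B|.-1, nu)%:R * ((1 - q) / (Q / K)) ^+ nu))); last first.
  move=> nu _; rewrite qterm_form //.
  rewrite powRB; last by apply/implyP => _; rewrite gt_eqF.
  rewrite powR_mulrn ?ltW //.
  rewrite -/Q -/K; set A := (Q / K) `^ S; set c := 'C(_, _)%:R.
  rewrite !expr_div_n; field.
  by rewrite (qpow hq0) -/Q !expf_neq0 // gt_eqF.
rewrite -big_distrr /=.
have hy : (1 - q) / (Q / K) + 1 = Q^-1.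
  rewrite /K /qint (qpow hq0) -/Q; field.
  by rewrite (gt_eqF Q0) /= subr_eq0 eq_sym (lt_eqF hq1).
have -> : #|B| = (#|B|.-1).+1 by rewrite prednK.
rewrite (eq_bigr (fun nu : 'I_(#|B|.-1).+1 => ((1 - q) / (Q / K)) ^+ nu *+ 'C(#|B|.-1, nu))); last first.
  by move=> nu _; rewrite mulr_natl.
rewrite -exprD1n hy exprS; ring.
Qed.


Lemma Dq_block (B : {set 'I_n}) N : (0 < #|B|)%N ->
  Dq (fun j k => qterm q (s j) k) B N =
  \sum_(0 <= nu < #|B|) 'C(#|B|.-1, nu)%:R * (1 - q) ^+ nu *
     mqzeta_trunc q [:: (\sum_(j in B) s j) - nu%:R] N.
Proof.
move=> B0; rewrite /Dq.
under eq_bigr => k _ do rewrite (block_k _ B0).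
rewrite exchange_big big_mkord /=; apply: eq_bigr => nu _.
have SB := sum_gt_card B0.
have Snu : 1 < (\sum_(j in B) s j) - nu%:R.
  have : (nu.+1%:R : R) <= #|B|%:R by rewrite ler_nat.
  rewrite -natr1; lra.
rewrite sum1; last by rewrite qterm0 ?mul0r // gt_eqF // (lt_trans ltr01 Snu).
by rewrite big_distrr; apply: eq_bigr => k _; rewrite mulr1.
Qed.

Lemma Dq_cvg (B : {set 'I_n}) : (0 < #|B|)%N ->
  Dq (fun j k => qterm q (s j) k) B N @[N --> \oo] -->
  \sum_(0 <= nu < #|B|) 'C(#|B|.-1, nu)%:R * (1 - q) ^+ nu *
     mqzeta q [:: (\sum_(j in B) s j) - nu%:R].
Proof.
move=> B0; under eq_cvg do rewrite Dq_block //.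
apply: cvg_sum_seq => nu; rewrite mem_index_iota => /andP[_ nuB] _.
have SB := sum_gt_card B0.
have al : all (fun x => 1 < x) [:: (\sum_(j in B) s j) - nu%:R].
  rewrite /= andbT.
  have : (nu.+1%:R : R) <= #|B|%:R by rewrite ler_nat.
  rewrite -natr1; lra.
have h := cvgMl_tmp (a := 'C(#|B|.-1, nu)%:R * (1 - q) ^+ nu) (trunc_cvg hq0 hq1 al). exact: h.
Qed.

End Block.


Unset Implicit Arguments.
Local Close Scope classical_set_scope.
Local Open Scope ring_scope.

Theorem theorem2p3 (R : realType) (q : R) (n : nat) (s : 'I_n -> R) :
  0 < q -> q < 1 -> (0 < n)%N -> (forall j, 1 < s j) ->
  \sum_(sigma : 'S_n) mqzeta q [seq s (sigma i) | i <- enum 'I_n]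
  = \sum_(P : {set {set 'I_n}} | finset.partition P [set: 'I_n])
      (-1) ^+ (n - #|P|) *
      \prod_(B in P)
        ((#|B|.-1)`!%:R *
         \sum_(0 <= nu < #|B|)
           'C(#|B|.-1, nu)%:R * (1 - q) ^+ nu *
           mqzeta q [:: (\sum_(j in B) s j) - nu%:R]).
Proof.
move=> hq0 hq1 n0 hs.
pose f := fun j k => qterm q (s j) k.
pose u N := \sum_(p <- permutations (enum 'I_n)) mqzeta_trunc q [seq s j | j <- p] N.
have hs' : forall p : seq 'I_n, all (fun x => 1 < x) [seq s j | j <- p].
  by move=> p; apply/allP => x /mapP[j _ ->].
have trN : forall (p : seq 'I_n) N, mqzeta_trunc q [seq s j | j <- p] N = Nest f p N.
  elim=> [|j p IH] N //=.
  rewrite sum1 ?qterm0 ?mul0r ?gt_eqF ?(lt_trans ltr01 (hs j)) //.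
  by apply: eq_bigr => k _; rewrite IH.
have uRP : forall N, u N = RP f [set: 'I_n] N.
  move=> N; rewrite /u (eq_bigr (fun p => Nest f p N)); last by move=> p _; rewrite trN.
  rewrite sum_perms_Nest ?enum_uniq // Iq_RP; congr (RP f _ N).
  by apply/setP => i; rewrite !inE mem_enum.
have hu : (u N @[N --> \oo] --> \sum_(sigma : 'S_n) mqzeta q [seq s (sigma i) | i <- enum 'I_n])%classic.
  rewrite (eq_bigr (fun sigma : 'S_n => (fun p => mqzeta q [seq s j | j <- p]) [seq sigma i | i <- enum 'I_n])); last first.
    by move=> sigma _ /=; rewrite -map_comp.
  rewrite (sum_Sn (fun p => mqzeta q [seq s j | j <- p])); apply: cvg_sum_seq => p _ _.
  exact: trunc_cvg.
have hr : (u N @[N --> \oo] --> \sum_(P : {set {set 'I_n}} | finset.partition P [set: 'I_n])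
      (-1) ^+ (n - #|P|) *
      \prod_(B in P)
        ((#|B|.-1)`!%:R *
         \sum_(0 <= nu < #|B|)
           'C(#|B|.-1, nu)%:R * (1 - q) ^+ nu *
           mqzeta q [:: (\sum_(j in B) s j) - nu%:R]))%classic.
  under eq_cvg do rewrite uRP.
  apply: cvg_sum_seq => P _ pP.
  have leP : (#|P| <= n)%N.
    have cn : n = (\sum_(A in P) #|A|)%N by rewrite -(card_partition pP) cardsT card_ord.
    rewrite [X in (_ <= X)%N]cn -sum1_card leq_sum // => B BP.
    by rewrite card_gt0 (partition_neq0 pP BP).
  have -> : (-1) ^+ (#|[set: 'I_n]%SET| + #|P|) = (-1) ^+ (n - #|P|) :> R.
    rewrite cardsT card_ord (_ : (n + #|P| = (n - #|P|) + 2 * #|P|)%N); last by lia.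
    by rewrite exprD exprM expr2 mulrNN mulr1 expr1n mulr1.
  have hp : ((\prod_(B in P) ((#|B|.-1)`!%:R * Dq f B N)) @[N --> \oo] -->
      \prod_(B in P) ((#|B|.-1)`!%:R *
         \sum_(0 <= nu < #|B|) 'C(#|B|.-1, nu)%:R * (1 - q) ^+ nu *
           mqzeta q [:: (\sum_(j in B) s j) - nu%:R]))%classic.
    apply: cvg_prod_seq => B BP.
    have B0 : (0 < #|B|)%N by rewrite card_gt0 (partition_neq0 pP BP).
    have h := Dq_cvg hq0 hq1 hs B0.
    exact: (cvgMl_tmp (a := (#|B|.-1)`!%:R) h).
  exact: (cvgMl_tmp (a := (-1) ^+ (n - #|P|)) hp).
have e1 := cvg_lim (@Rhausdorff R) hu. have e2 := cvg_lim (@Rhausdorff R) hr. by rewrite -e1 -e2.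
Qed.
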